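(* Let $-1<q<1$, $q\ne0$. For $s\in\frac12\mathbb Z_+$ let $\varphi_s:{\rm Pol}(SU_q(2))\to M_{2s+1}$ be the homomorphism associated to the $AN_q$-matrix $A_s$, and let $v_s^{(t)}=(\mathrm{id}\otimes\varphi_s)(u^{(t)})\in M_{2t+1}\otimes M_{2s+1}$. Then there is a constant $C_q$ depending only on $q$ such that $$|q|^{-2st}\le\|v_s^{(t)}\|_\infty\le C_q^s|q|^{-2st}\quad\text{for all }s,t\in\tfrac12\mathbb Z_+.$$
   Context: ${\rm Pol}(SU_q(2))$ is the $*$-algebra generated by $a_q,c_q$ subject to $a_q^*a_q+c_q^*c_q=1=a_qa_q^*+q^2c_q^*c_q$, $c_q^*c_q=c_qc_q^*$, $a_qc_q=qc_qa_q$, $a_qc_q^*=qc_q^*a_q$, with coproduct $\Delta(a_q)=a_q\otimes a_q-qc_q^*\otimes c_q$, $\Delta(c_q)=c_q\otimes a_q+a_q^*\otimes c_q$; $u^{(t)}\in M_{2t+1}({\rm Pol}(SU_q(2)))$, $t\in\frac12\mathbb Z_+$, are its irreducible unitary representations, $u^{(1/2)}=\begin{bmatrix}a_q&-qc_q^*\\c_q&a_q^*\end{bmatrix}$. $A_s=\begin{bmatrix}x_s&y_s\\0&x_s^{-1}\end{bmatrix}$ acts on $\ell^2_{2s+1}$ with basis $e_{-s},\dots,e_s$ by $x_se_k=q^ke_k$, $y_se_k=\sqrt{|q|^{-2s}-|q|^{-2k}-|q|^{2k+2}+|q|^{2s+2}}\,e_{k+1}$, $e_{s+1}=0$ (for $q<0$,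 $q^k:=|q|^ke^{i\pi k}$). $\varphi_s$ is the unique unital homomorphism with $\varphi_s(a_q)=x_s$, $\varphi_s(-qc_q^* )=y_s$, $\varphi_s(c_q)=0$, $\varphi_s(a_q^* )=x_s^{-1}$. $\|\cdot\|_\infty$ is the operator norm. *)

(* Defs.v *)
From HB Require Import structures.
From mathcomp Require Import all_boot all_order all_algebra.
From mathcomp Require Import all_classical all_reals all_analysis.
From mathcomp Require Import complex.
Import Order.TTheory GRing.Theory Num.Theory.
Local Open Scope ring_scope.
Local Open Scope classical_set_scope.
Local Open Scope complex_scope.

Section SUq2.
Variable R : realType.
Local Notation C := R[i].

(* Half-integer parametrisation: s = m/2 with m : nat; the space
   \ell^2_{2s+1} has basis e_{-s},...,e_s, and e_k is the ordinal
   j : 'I_(m.+1) with k = -s + j. *)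
Definition hk (m : nat) (j : 'I_m.+1) : R := j%:R - m%:R / 2.

(* q^k for a half-integer k = (2j - m)/2 :
   |q|^k for q > 0, and |q|^k e^{i pi k} for q < 0, where
   e^{i pi k} = 'i ^ (2k) = 'i ^ (2j - m). *)
Definition qhalfpow (q : R) (m : nat) (j : 'I_m.+1) : C :=
  (powR `|q| (hk m j))%:C *
  (if q < 0 then ('i : C) ^ ((2 * j)%:Z - m%:Z) else 1).

(* x_s e_k = q^k e_k  (matrices act on column vectors: (x)_{k,l}) *)
Definition xs (q : R) (m : nat) : 'M[C]_m.+1 :=
  \matrix_(a < m.+1, b < m.+1) (if a == b then qhalfpow q m b else 0).

(* y_s e_k = sqrt(|q|^{-2s} - |q|^{-2k} - |q|^{2k+2} + |q|^{2s+2}) e_{k+1},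
   with e_{s+1} = 0 *)
Definition ycoef (q : R) (m : nat) (j : 'I_m.+1) : R :=
  Num.sqrt (powR `|q| (- m%:R) - powR `|q| (- (2 * hk m j))
            - powR `|q| (2 * hk m j + 2) + powR `|q| (m%:R + 2)).

Definition ys (q : R) (m : nat) : 'M[C]_m.+1 :=
  \matrix_(a < m.+1, b < m.+1)
     (if a == b.+1 :> nat then (ycoef q m b)%:C else 0).

(* the AN_q-matrix A_s = [[x_s, y_s], [0, x_s^{-1}]]
   = (id (x) phi_s)(u^{(1/2)}), entries indexed by 'I_2 *)
Definition As (q : R) (m : nat) (a b : 'I_2) : 'M[C]_m.+1 :=
  if a == 0 then (if b == 0 then xs q m else ys q m)
  else (if b == 0 then 0 else invmx (xs q m)).

(* Spin t = n/2 representation u^{(t)} realised as the q-symmetric part of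
   the n-fold tensor power u^{(1/2)} T ... T u^{(1/2)}
   ((u T w)_{(ij),(kl)} = u_{ik} w_{jl}).  Words w : 'I_n -> 'I_2 index the
   standard basis of (C^2)^{(x) n}; the invariant subspace is spanned by
     f_k = sum_{w with k letters 1} q^{inv w} e_w,
   inv w = #{ i < j : w_i = 0, w_j = 1 }. *)
Definition wt (n : nat) (w : {ffun 'I_n -> 'I_2}) : nat :=
  #|[set i : 'I_n | w i == 1]|.
Definition winv (n : nat) (w : {ffun 'I_n -> 'I_2}) : nat :=
  #|[set p : 'I_n * 'I_n | (p.1 < p.2)%N && (w p.1 == 0) && (w p.2 == 1)]|.
Definition fnorm (q : R) (n : nat) (k : 'I_n.+1) : R :=
  Num.sqrt (\sum_(w : {ffun 'I_n -> 'I_2} | wt n w == k) q ^+ (2 * winv n w)).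

(* (id (x) phi_s)(u^{(1/2)} T ... T u^{(1/2)}) block (w, w') *)
Definition tensA (q : R) (m n : nat) (w w' : {ffun 'I_n -> 'I_2})
  : 'M[C]_m.+1 := \prod_(i < n) As q m (w i) (w' i).

(* v_s^{(t)} = (id (x) phi_s)(u^{(t)}), as a block matrix: block (k,l) *)
Definition vblock (q : R) (m n : nat) (k l : 'I_n.+1) : 'M[C]_m.+1 :=
  ((fnorm q n k * fnorm q n l)^-1)%:C *:
  \sum_(w : {ffun 'I_n -> 'I_2} | wt n w == k)
   \sum_(w' : {ffun 'I_n -> 'I_2} | wt n w' == l)
     ((q ^+ winv n w * q ^+ winv n w')%:C *: tensA q m n w w').

(* v_s^{(t)} in M_{2t+1} (x) M_{2s+1}, indexed by pairs (k, a) *)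
Definition vst (q : R) (m n : nat)
  (p p' : 'I_n.+1 * 'I_m.+1) : C :=
  vblock q m n p.1 p'.1 p.2 p'.2.

Definition l2norm (I : finType) (v : I -> C) : R :=
  Num.sqrt (\sum_(i : I) (Normc.normc (v i)) ^+ 2).
Definition opnorm (I : finType) (M : I -> I -> C) : R :=
  sup [set r : R | exists v : I -> C,
         l2norm I v <= 1 /\ r = l2norm I (fun i => \sum_(j : I) M i j * v j)].

End SUq2.

Arguments opnorm {R I}.
Arguments vst {R}.

(* Main.v *)
Require Import Defs.
From HB Require Import structures.
From mathcomp Require Import all_boot all_order all_algebra.
From mathcomp Require Import all_classical all_reals all_analysis.
From mathcomp Require Import complex.
From mathcomp Require Import ring lra zify.
Import Order.TTheory GRing.Theory Num.Theory.
Set Implicit Arguments. Unset Strict Implicit. Unset Printing Implicit Defensive.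
Local Open Scope ring_scope.
Local Open Scope complex_scope.
#[local] Arguments hk {R}.
#[local] Arguments qhalfpow {R}.
#[local] Arguments xs {R}.
#[local] Arguments ycoef {R}.
#[local] Arguments ys {R}.
#[local] Arguments As {R}.
#[local] Arguments fnorm {R}.
#[local] Arguments tensA {R}.
#[local] Arguments vblock {R}.
Section Comb.
Variable R : realType.
Variable a : R.
Hypothesis a0 : 0 <= a.
Hypothesis a1 : a < 1.

Definition consw n (b : 'I_2) (w : {ffun 'I_n -> 'I_2}) : {ffun 'I_n.+1 -> 'I_2} :=
  [ffun i => if unlift ord0 i is Some j then w j else b].

Lemma consw0 n b w : @consw n b w ord0 = b.
Proof. by rewrite ffunE unlift_none. Qed.
Lemma conswS n b w j : @consw n b w (lift ord0 j) = w j.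
Proof. by rewrite ffunE liftK. Qed.

Lemma in_set_bool (T : Type) (P : T -> bool) x :
  (x \in [set y | P y]%classic) = P x.
Proof. by apply/idP/idP; rewrite in_setE. Qed.

Lemma wtE n w : wt n w = (\sum_(i < n) (w i == 1%R : nat))%N.
Proof.
rewrite /wt -sum1_card big_mkcond /=; apply: eq_bigr => i _.
by rewrite in_set_bool; case: eqP.
Qed.

Lemma winvE n w : winv n w =
  (\sum_(i < n) \sum_(j < n) [&& (i < j)%N, w i == 0%R & w j == 1%R] : nat)%N.
Proof.
rewrite /winv -sum1_card big_mkcond /= pair_big /=.
apply: eq_bigr => -[i j] _ /=; by rewrite in_set_bool /= -andbA; case: [&& _, _ & _].
Qed.

Lemma wt_cons n b w : wt n.+1 (@consw n b w) = ((b == 1%R) + wt n w)%N.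
Proof.
rewrite !wtE big_ord_recl consw0; congr addn.
by apply: eq_bigr => i _; rewrite conswS.
Qed.

Lemma winv_cons n b w :
  winv n.+1 (@consw n b w) = ((b == 0%R) * wt n w + winv n w)%N.
Proof.
rewrite !winvE wtE big_ord_recl /= big_ord_recl /= consw0.
congr addn.
  rewrite big_distrr /=; apply: eq_bigr => j _.
  by rewrite conswS /=; case: (b == 0%R); case: (w j == 1%R).
apply: eq_bigr => i _; rewrite big_ord_recl /=.
rewrite add0n; apply: eq_bigr => j _; rewrite !conswS.
by rewrite /bump !leq0n !add1n ltnS.
Qed.

Lemma sum_cons n (F : {ffun 'I_n.+1 -> 'I_2} -> R) :
  \sum_w F w = \sum_(b : 'I_2) \sum_(w : {ffun 'I_n -> 'I_2}) F (@consw n b w).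
Proof.
rewrite pair_big /=.
rewrite (reindex (fun p : 'I_2 * {ffun 'I_n -> 'I_2} => @consw n p.1 p.2)) //=.
exists (fun w : {ffun 'I_n.+1 -> 'I_2} => (w ord0, [ffun j => w (lift ord0 j)])).
  move=> [b w] _ /=; rewrite consw0; congr pair.
  by apply/ffunP => j; rewrite ffunE conswS.
move=> w _ /=; apply/ffunP => i; rewrite ffunE.
by case: unliftP => [j|] ->; rewrite ?liftK ?unlift_none ?ffunE.
Qed.

Definition G n k := \sum_(w : {ffun 'I_n -> 'I_2} | wt n w == k) a ^+ winv n w.

Lemma sum_I2 (F : 'I_2 -> R) : \sum_(b : 'I_2) F b = F 0%R + F 1%R.
Proof. by rewrite big_ord_recl big_ord1; congr (F _ + F _); apply: val_inj. Qed.

Lemma Grec n k :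
  G n.+1 k = a ^+ k * G n k + (if k is k'.+1 then G n k' else 0).
Proof.
rewrite /G big_mkcond sum_cons sum_I2 /=.
congr (_ + _).
  rewrite [in RHS]big_mkcond mulr_sumr; apply: eq_bigr => w _.
  rewrite wt_cons winv_cons /= add0n mul1n.
  by case: eqP => [->|]; rewrite ?mulr0 // exprD.
case: k => [|k].
  by apply: big1 => w _; rewrite wt_cons.
rewrite [in RHS]big_mkcond; apply: eq_bigr => w _.
by rewrite wt_cons winv_cons /= add1n eqSS mul0n add0n.
Qed.

Definition Q k := \prod_(i < k) (1 - a ^+ i.+1)^-1.

Lemma QS k : Q k.+1 = Q k * (1 - a ^+ k.+1)^-1.
Proof. by rewrite /Q big_ord_recr. Qed.

Lemma apow_lt1 i : a ^+ i.+1 < 1.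
Proof. by rewrite exprn_ilt1 // (le_lt_trans _ a1). Qed.

Lemma Q_ge1 k : 1 <= Q k.
Proof.
elim: k => [|k IH]; first by rewrite /Q big_ord0.
rewrite QS; apply: (le_trans IH); rewrite ler_peMr ?(le_trans ler01 IH) //.
rewrite invf_ge1 ?subr_gt0 ?apow_lt1 //.
by rewrite lerBlDr lerDl exprn_ge0.
Qed.

Lemma G_ge0 n k : 0 <= G n k.
Proof. by apply: sumr_ge0 => w _; rewrite exprn_ge0. Qed.

Lemma G_le_Q n k : G n k <= Q k.
Proof.
elim: n k => [|n IH] k.
  apply: (le_trans _ (Q_ge1 k)).
  apply: (@le_trans _ _ (\sum_(w : {ffun 'I_0 -> 'I_2}) 1)).
    rewrite [X in X <= _]big_mkcond; apply: ler_sum => w _.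
    by case: ifP => _ //; rewrite exprn_ile1 // ltW.
  rewrite sumr_const card_ffun (_ : #|'I_0| = 0%N) ?card_ord //.

rewrite Grec; case: k => [|k].
  by rewrite expr0 mul1r addr0.
rewrite QS.
apply: (@le_trans _ _ (a ^+ k.+1 * Q k.+1 + Q k)).
  by apply: lerD; [apply: ler_wpM2l; rewrite ?exprn_ge0 | ].
rewrite QS; set x := a ^+ k.+1.
have hx : 1 - x != 0 by rewrite subr_eq0 eq_sym lt_eqF // apow_lt1.
rewrite -{2}(mulr1 (Q k)) -[X in _ + Q k * X <= _](mulfV hx).
by rewrite mulrCA -mulrDr -mulrDl addrC subrK mul1r.
Qed.

Definition Kc := expR (((1 - a) ^+ 2)^-1).

Lemma Q_le_exp k : Q k <= expR (((1 - a) ^+ 2)^-1 * (1 - a ^+ k)).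
Proof.
have d0 : 0 < 1 - a by rewrite subr_gt0.
set c := ((1 - a) ^+ 2)^-1.
have c0 : 0 <= c by rewrite invr_ge0 exprn_ge0 // ltW.
elim: k => [|k IH]; first by rewrite /Q big_ord0 expr0 subrr mulr0 expR0.
rewrite QS; set x := a ^+ k.+1.
have x0 : 0 <= x by rewrite exprn_ge0.
have x1 : x <= a by rewrite /x exprS ler_piMr // exprn_ile1 // ltW.
have dx : 0 < 1 - x by rewrite subr_gt0 apow_lt1.
have h1 : (1 - x)^-1 <= expR (x / (1 - a)).
  apply: (le_trans _ (expR_ge1Dx _)).
  have -> : (1 - x)^-1 = 1 + x / (1 - x).
    by field; rewrite subr_eq0 eq_sym lt_eqF // apow_lt1.
  rewrite lerD2l ler_wpM2l // lef_pV2 ?posrE //.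
  by rewrite lerD2l lerN2.
apply: (le_trans (ler_pM (le_trans ler01 (Q_ge1 _)) _ IH h1)).
  by rewrite invr_ge0 ltW.
rewrite -expRD ler_expR /x exprS.
set y := a ^+ k.
have y0 : 0 <= y by rewrite exprn_ge0.
have -> : a * y / (1 - a) = c * ((1 - a) * (a * y)).
  by rewrite /c; field; rewrite subr_eq0 eq_sym lt_eqF.
have c1 : 0 < c by rewrite invr_gt0 exprn_gt0.
rewrite -mulrDr ler_pM2l //.
have := mulr_ge0 y0 (exprn_ge0 2 (ltW d0)).
nra.
Qed.

Lemma Q_le_K k : Q k <= Kc.
Proof.
apply: (le_trans (Q_le_exp k)); rewrite ler_expR /Kc.
apply: ler_piMr; first by rewrite invr_ge0 exprn_ge0 // subr_ge0 ltW.
by rewrite lerBlDr lerDl exprn_ge0.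
Qed.

Lemma Kc_ge1 : 1 <= Kc.
Proof. exact: le_trans (Q_ge1 0) (Q_le_K 0). Qed.
End Comb.

Section Gen.
Variable R : realType.
Local Notation C := R[i].
Local Notation nc := (@Normc.normc R).

Lemma nc_ge0 (x : C) : 0 <= nc x.
Proof. by case: x => u v; rewrite /Normc.normc sqrtr_ge0. Qed.

Lemma nc_real (x : R) : nc (x%:C) = `|x|.
Proof. by rewrite /Normc.normc /= expr0n /= addr0 sqrtr_sqr. Qed.

Lemma nc0 : nc 0 = 0.
Proof. exact: Normc.normc0. Qed.

Lemma nc_sum (I : Type) (r : seq I) (P : pred I) (F : I -> C) :
  nc (\sum_(i <- r | P i) F i) <= \sum_(i <- r | P i) nc (F i).
Proof.
elim: r => [|x r IH]; first by rewrite !big_nil nc0.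
rewrite !big_cons; case: ifP => _ //.
exact: le_trans (le_normcD _ _) (lerD (lexx _) IH).
Qed.

Lemma sum_neq0 (I : finType) (P : pred I) (F : I -> C) :
  \sum_(i | P i) F i != 0 -> exists i, P i /\ F i != 0.
Proof.
case: (pickP [pred i | P i && (F i != 0)]) => [i /andP[hi hF] _|none].
  by exists i.
by rewrite big1 ?eqxx // => i hi; move: (none i) => /=; rewrite hi /= => /negbFE/eqP.
Qed.

Lemma cs_sum (I : finType) (A : {pred I}) (f : I -> R) :
  (\sum_(i in A) f i) ^+ 2 <= #|A|%:R * \sum_(i in A) f i ^+ 2.
Proof.
set S2 := \sum_(i in A) f i ^+ 2.
have E1 : \sum_(i in A) \sum_(j in A) f i ^+ 2 = #|A|%:R * S2.
  under eq_bigr do rewrite sumr_const.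
  by rewrite /S2 mulr_sumr; apply: eq_bigr => i _; rewrite mulr_natl.
have E2 : \sum_(i in A) \sum_(j in A) f j ^+ 2 = #|A|%:R * S2.
  by rewrite sumr_const mulr_natl.
have E : \sum_(i in A) \sum_(j in A) (f i ^+ 2 + f j ^+ 2) / 2 =
   (\sum_(i in A) \sum_(j in A) f i ^+ 2 + \sum_(i in A) \sum_(j in A) f j ^+ 2) / 2.
  rewrite -big_split /= mulr_suml; apply: eq_bigr => i _.
  by rewrite -big_split /= mulr_suml.
have -> : #|A|%:R * S2 = \sum_(i in A) \sum_(j in A) (f i ^+ 2 + f j ^+ 2) / 2.
  by rewrite E E1 E2; field.
rewrite expr2 mulr_suml.
apply: ler_sum => i _; rewrite mulr_sumr; apply: ler_sum => j _.
have := sqr_ge0 (f i - f j); nra.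
Qed.
End Gen.

Section Mat.
Variable R : realType.
Local Notation C := R[i].
Local Notation nc := (@Normc.normc R).
Variable q : R.
Hypothesis hq1 : -1 < q.
Hypothesis hq2 : q < 1.
Hypothesis hq0 : q != 0.

Lemma a_gt0 : 0 < `|q|.
Proof. by rewrite normr_gt0. Qed.
Lemma a_lt1 : `|q| < 1.
Proof. by rewrite ltr_norml hq1 hq2. Qed.
Lemma a01 : 0 < `|q| <= 1.
Proof. by rewrite a_gt0 ltW // a_lt1. Qed.

Lemma nc_ipow (z : int) : nc ('i ^ z) = 1.
Proof.
have hi : nc 'i = 1.
  by rewrite /Normc.normc /= expr0n expr1n add0r sqrtr1.
have hX k : nc ('i ^+ k) = 1.
  elim: k => [|k IH]; first by rewrite expr0 Normc.normc1.
  by rewrite exprS Normc.normcM hi IH mulr1.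
case: z => k /=; first exact: hX.
by rewrite Normc.normcV hX invr1.
Qed.

Variable m : nat.
Definition beta := powR `|q| (- (m%:R / 2)).

Lemma beta_ge0 : 0 <= beta.
Proof. exact: powR_ge0. Qed.

Lemma nc_qhp j : nc (qhalfpow q m j) = powR `|q| (hk m j).
Proof.
rewrite /qhalfpow Normc.normcM nc_real ger0_norm ?powR_ge0 //.
by case: ifP => _; rewrite ?nc_ipow ?Normc.normc1 mulr1.
Qed.

Lemma qhp_neq0 j : qhalfpow q m j != 0.
Proof.
apply/negP => /eqP h; have := nc_qhp j; rewrite h nc0 => /esym/eqP.
by rewrite gt_eqF // powR_gt0 // a_gt0.
Qed.

Lemma hk_bounds j : -(m%:R / 2) <= @hk R m j <= m%:R / 2.
Proof.
have j0 : 0 <= j%:R :> R by rewrite ler0n.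
have jm : j%:R <= m%:R :> R by rewrite ler_nat -ltnS ltn_ord.
rewrite /hk; apply/andP; split; lra.
Qed.

Lemma qhp_le j : nc (qhalfpow q m j) <= beta.
Proof.
rewrite nc_qhp /beta; apply: (ger_powR a01).
by case/andP: (hk_bounds j).
Qed.

Lemma qhpV_le j : nc ((qhalfpow q m j)^-1) <= beta.
Proof.
rewrite Normc.normcV nc_qhp -powRN /beta; apply: (ger_powR a01).
case/andP: (hk_bounds j) => _ h; lra.
Qed.

Lemma beta_sq : beta ^+ 2 = powR `|q| (- m%:R).
Proof.
rewrite /beta -powR_mulrn ?powR_ge0 // -powRrM; congr powR; by rewrite mulNr divfK ?pnatr_eq0.
Qed.

Lemma ycoef_le j : ycoef q m j <= beta.
Proof.
rewrite /ycoef -(ger0_norm beta_ge0) -[X in _ <= X]sqrtr_sqr ler_sqrt ?sqr_ge0 // beta_sq.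
have h1 : powR `|q| (m%:R + 2) <= powR `|q| (2 * hk m j + 2).
  apply: (ger_powR a01); case/andP: (hk_bounds j) => _ h; lra.
have h2 := powR_ge0 `|q| (- (2 * hk m j)).
lra.
Qed.

Lemma xs_diag : xs q m = diag_mx (\row_j qhalfpow q m j).
Proof.
apply/matrixP => i j; rewrite !mxE; case: eqP => [->|_]; by rewrite ?mulr1n ?mulr0n.
Qed.

Lemma invxs : invmx (xs q m) = diag_mx (\row_j (qhalfpow q m j)^-1).
Proof.
set D := diag_mx _.
have hXD : xs q m *m D = 1%:M.
  rewrite xs_diag mul_diag_mx; apply/matrixP => i j; rewrite !mxE.
  case: eqP => [->|_]; rewrite ?mulr1n ?mulr0n ?mulr0 //.
  by rewrite mulfV ?qhp_neq0.
have [hu _] := mulmx1_unit hXD.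
by rewrite -[RHS]mul1mx -(mulVmx hu) -mulmxA hXD mulmx1.
Qed.

Definition shiftP (d : int) (b : R) (M : 'M[C]_m.+1) :=
  forall i j : 'I_m.+1, (M i j != 0 -> (i%:Z = j%:Z + d)%R) /\ nc (M i j) <= b.

Lemma shiftP_ge0 d b M : shiftP d b M -> 0 <= b.
Proof. by move=> h; exact: le_trans (nc_ge0 _) (h ord0 ord0).2. Qed.

Lemma shiftP_mul d1 d2 b1 b2 M N :
  shiftP d1 b1 M -> shiftP d2 b2 N -> shiftP (d1 + d2) (b1 * b2) (M *m N).
Proof.
move=> hM hN i j; rewrite mxE.
case: (pickP (fun c => M i c * N c j != 0)) => [c hc | none]; last first.
  rewrite big1 ?nc0; last by move=> c _; move: (none c) => /negbFE/eqP.
  split; first by rewrite eqxx.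
  by rewrite mulr_ge0 // ?(shiftP_ge0 hM) ?(shiftP_ge0 hN).
move: (hc); rewrite mulf_eq0 negb_or => /andP[hMc hNc].
have ic := (hM i c).1 hMc; have cj := (hN c j).1 hNc.
rewrite (bigD1 c) //= big1 ?addr0; last first.
  move=> c' hc'; apply/eqP; apply: contraNT hc'.
  rewrite mulf_eq0 negb_or => /andP[h1 _].
  have ic' := (hM i c').1 h1.
  have : c'%:Z = c%:Z by apply: (addIr d1); rewrite -ic' -ic.
  by move=> [] h; apply/eqP; apply: val_inj.
split.
  by move=> _; rewrite ic cj -addrA [d2 + d1]addrC.
rewrite Normc.normcM; apply: ler_pM; [exact: nc_ge0 | exact: nc_ge0 | |].
  exact: (hM i c).2.
exact: (hN c j).2.
Qed.

Lemma shiftP_1 : shiftP 0 1 1%:M.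
Proof.
move=> i j; rewrite mxE; case: (eqVneq i j) => [->|h].
  by rewrite ?eqxx mulr1n Normc.normc1 addr0.
by rewrite ?(negbTE h) mulr0n eqxx nc0 ler01.
Qed.

Lemma shiftP_prod n (F : 'I_n -> 'M[C]_m.+1) (d : 'I_n -> int) b :
  (forall i, shiftP (d i) b (F i)) ->
  shiftP (\sum_i d i) (b ^+ n) (\prod_i F i).
Proof.
elim: n F d => [|n IH] F d hF.
  by rewrite !big_ord0 expr0; exact: shiftP_1.
rewrite !big_ord_recr /= exprSr.
exact: shiftP_mul (IH _ _ (fun i => hF _)) (hF _).
Qed.

Definition dd (x y : 'I_2) : int := (y == 1%R : nat)%:Z - (x == 1%R : nat)%:Z.

Lemma I2_cases (x : 'I_2) : x = 0%R \/ x = 1%R.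
Proof. by case: x => [[|[|//]] hx]; [left|right]; apply: val_inj. Qed.

Lemma As_shift x y : shiftP (dd x y) beta (As q m x y).
Proof.
case: (I2_cases x) => ->; case: (I2_cases y) => -> i j; rewrite /As /dd /=.
- rewrite /xs mxE; case: ifP => [/eqP ->|_]; last by rewrite eqxx nc0 beta_ge0.
  by split; [rewrite subrr addr0 | exact: qhp_le].
- rewrite /ys mxE; case: ifP => [/eqP h|_]; last by rewrite eqxx nc0 beta_ge0.
  split; first by rewrite h; lia.
  by rewrite nc_real ger0_norm ?sqrtr_ge0 // ycoef_le.
- by rewrite mxE eqxx nc0 beta_ge0.
- rewrite invxs mxE; case: (eqVneq i j) => [->|h].
    by rewrite ?eqxx mxE mulr1n; split; [rewrite subrr addr0 | exact: qhpV_le].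
  by rewrite ?(negbTE h) mulr0n eqxx nc0 beta_ge0.
Qed.

Lemma Posz_sum n (F : 'I_n -> nat) :
  ((\sum_i F i)%N)%:Z = \sum_i (F i)%:Z.
Proof. exact: (big_morph _ PoszD (erefl _)). Qed.

Lemma tensA_shift n w w' :
  shiftP ((wt n w')%:Z - (wt n w)%:Z) (beta ^+ n) (tensA q m n w w').
Proof.
have := shiftP_prod (fun i => As_shift (w i) (w' i)).
by rewrite /dd sumrB -!Posz_sum -!wtE.
Qed.

End Mat.

Section VB.
Variable R : realType.
Local Notation C := R[i].
Local Notation nc := (@Normc.normc R).
Variable q : R.
Hypothesis hq1 : -1 < q.
Hypothesis hq2 : q < 1.
Hypothesis hq0 : q != 0.

Lemma ncX (x : C) k : nc (x ^+ k) = nc x ^+ k.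
Proof.
elim: k => [|k IH]; first by rewrite !expr0 Normc.normc1.
by rewrite !exprS Normc.normcM IH.
Qed.

Lemma sum_min n k : (\sum_(i < n) ((i < k)%N : nat))%N = minn k n.
Proof.
elim: n => [|n IH]; first by rewrite big_ord0 minn0.
rewrite big_ord_recr /= IH; lia.
Qed.

Lemma fnorm_ge1 n (k : 'I_n.+1) : 1 <= fnorm q n k.
Proof.
pose w0 := [ffun i : 'I_n => if (i < k)%N then 1%R else 0%R : 'I_2].
have hwt : wt n w0 = k.
  rewrite wtE (eq_bigr (fun i : 'I_n => ((i < k)%N : nat))); last first.
    by move=> i _; rewrite ffunE; case: ifP.
  rewrite sum_min; have := ltn_ord k; lia.
have hinv : winv n w0 = 0%N.
  rewrite winvE big1 // => i _; rewrite big1 // => j _; rewrite !ffunE.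
  case: (ltnP i k) => hi; case: (ltnP j k) => hj //=; rewrite ?andbF //.
  by case: ltnP => // hij; exfalso; lia.
rewrite /fnorm -sqrtr1 ler_sqrt; last first.
  by apply: sumr_ge0 => w _; rewrite exprM exprn_ge0 // sqr_ge0.
rewrite (bigD1 w0) /=; last by rewrite hwt.
rewrite hinv muln0 expr0 lerDl; apply: sumr_ge0 => w _.
by rewrite exprM exprn_ge0 // sqr_ge0.
Qed.

Variables m n : nat.

Lemma vblock_entry k l i j : vblock q m n k l i j =
  ((fnorm q n k * fnorm q n l)^-1)%:C *
  \sum_(w | wt n w == k) \sum_(w' | wt n w' == l)
     ((q ^+ winv n w * q ^+ winv n w')%:C * tensA q m n w w' i j).
Proof.
rewrite /vblock mxE summxE; congr (_ * _); apply: eq_bigr => w _.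
by rewrite summxE; apply: eq_bigr => w' _; rewrite mxE.
Qed.

Lemma vblock_supp k l i j : vblock q m n k l i j != 0 ->
  (i%:Z + k%:Z = j%:Z + l%:Z)%R.
Proof.
rewrite vblock_entry mulf_eq0 negb_or => /andP[_ /sum_neq0 [w [/eqP hw]]].
move=> /sum_neq0 [w' [/eqP hw']]; rewrite mulf_eq0 negb_or => /andP[_ h].
have := (tensA_shift hq1 hq2 hq0 w w' i j).1 h.
rewrite hw hw' => ->; lia.
Qed.

Lemma fnorm_gt0 n' (k : 'I_n'.+1) : 0 < fnorm q n' k.
Proof. exact: lt_le_trans ltr01 (fnorm_ge1 k). Qed.

Lemma coef_bounds k l :
  0 <= (fnorm q n k * fnorm q n l)^-1 <= 1.
Proof.
have h1 := fnorm_ge1 k; have h2 := fnorm_ge1 l.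
have hp : 1 <= fnorm q n k * fnorm q n l.
  by rewrite -[1]mulr1; apply: ler_pM.
rewrite invr_ge0 (le_trans ler01 hp) /= invf_le1 //.
exact: lt_le_trans ltr01 hp.
Qed.

Lemma nc_term w w' i j :
  nc ((q ^+ winv n w * q ^+ winv n w')%:C * tensA q m n w w' i j) <=
  `|q| ^+ winv n w * `|q| ^+ winv n w' * beta q m ^+ n.
Proof.
rewrite Normc.normcM nc_real normrM !normrX.
apply: ler_wpM2l; first by rewrite mulr_ge0 // exprn_ge0.
exact: (tensA_shift hq1 hq2 hq0 w w' i j).2.
Qed.

Lemma vblock_bound k l i j :
  nc (vblock q m n k l i j) <= beta q m ^+ n * Kc `|q| ^+ 2.
Proof.
have a0 : 0 <= `|q| by [].
have a1 := a_lt1 hq1 hq2.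
rewrite vblock_entry Normc.normcM nc_real.
case/andP: (coef_bounds k l) => c0 c1.
rewrite ger0_norm //.
set S := \sum_(w | _) _.
have hS : nc S <= G `|q| n k * G `|q| n l * beta q m ^+ n.
  apply: le_trans (nc_sum _ _ _) _.
  rewrite /G mulr_suml mulr_suml; apply: ler_sum => w _.
  apply: le_trans (nc_sum _ _ _) _.
  rewrite mulrAC mulr_sumr; apply: ler_sum => w' _.
  by rewrite mulrAC; exact: nc_term.
apply: le_trans (ler_pM c0 (nc_ge0 _) c1 hS) _.
rewrite mul1r mulrC expr2.
apply: ler_wpM2l; first by rewrite exprn_ge0 // beta_ge0.
have hG k' : G `|q| n k' <= Kc `|q|.
  exact: le_trans (G_le_Q a0 a1 _ _) (Q_le_K a0 a1 _).
by apply: ler_pM; rewrite ?G_ge0.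
Qed.
End VB.

Section VB0.
Variable R : realType.
Local Notation C := R[i].
Local Notation nc := (@Normc.normc R).
Variable q : R.
Hypothesis hq1 : -1 < q.
Hypothesis hq2 : q < 1.
Hypothesis hq0 : q != 0.

Lemma hk_0 m : @hk R m ord0 = - (m%:R / 2).
Proof. by rewrite /hk sub0r. Qed.

Lemma qhp0 : qhalfpow q 0 ord0 = 1.
Proof.
rewrite /qhalfpow hk_0 mul0r oppr0 powRr0 mul1r.
by case: ifP => _ //; rewrite muln0 subrr expr0z.
Qed.

Lemma As0 x y : As q 0 x y ord0 ord0 = (x == y)%:R.
Proof.
case: (I2_cases x) => ->; case: (I2_cases y) => ->; rewrite /As /=.
- by rewrite /xs mxE /= qhp0.
- by rewrite /ys mxE.
- by rewrite mxE.
- by rewrite (invxs hq0) !mxE /= qhp0 invr1.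
Qed.

Lemma prod11 n (F : 'I_n -> 'M[C]_1) :
  (\prod_i F i) ord0 ord0 = \prod_i F i ord0 ord0.
Proof.
elim: n F => [|n IH] F; first by rewrite !big_ord0 mxE.
rewrite !big_ord_recr /= -IH -mulmxE mxE big_ord1.
done.
Qed.

Lemma tensA0 n w w' : tensA q 0 n w w' ord0 ord0 = (w == w')%:R.
Proof.
rewrite /tensA prod11.
under eq_bigr do rewrite As0.
case: (eqVneq w w') => [->|h].
  by rewrite big1 // => i _; rewrite eqxx.
have [i hi] : exists i, w i != w' i.
  apply/existsP; apply: contraR h => /existsPn hn.
  by apply/eqP/ffunP => i; apply/eqP/negPn/hn.
by rewrite (bigD1 i) //= (negbTE hi) mul0r.
Qed.

Lemma sum_delta (I : finType) (P : pred I) (g : I -> R) x :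
  \sum_(y | P y) (g y * (x == y)%:R) = if P x then g x else 0.
Proof.
rewrite big_mkcond (bigD1 x) //= eqxx mulr1 big1 ?addr0.
  by case: ifP.
by move=> y hy; rewrite eq_sym (negbTE hy) mulr0; case: ifP.
Qed.

Lemma vblock0_bound n k l : nc (vblock q 0 n k l ord0 ord0) <= 1.
Proof.
rewrite vblock_entry Normc.normcM nc_real.
case/andP: (coef_bounds hq1 hq2 hq0 k l) => c0 c1.
rewrite ger0_norm //.
have hS : nc (\sum_(w | wt n w == k) \sum_(w' | wt n w' == l)
     ((q ^+ winv n w * q ^+ winv n w')%:C * tensA q 0 n w w' ord0 ord0)) <=
   \sum_(w | wt n w == k) \sum_(w' | wt n w' == l)
     (`|q| ^+ winv n w * `|q| ^+ winv n w' * (w == w')%:R).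
  apply: le_trans (nc_sum _ _ _) _; apply: ler_sum => w _.
  apply: le_trans (nc_sum _ _ _) _; apply: ler_sum => w' _.
  rewrite tensA0 Normc.normcM nc_real normrM !normrX.
  by case: (w == w'); rewrite ?Normc.normc1 ?nc0.
apply: le_trans (ler_wpM2l c0 hS) _.
under eq_bigr do rewrite sum_delta.
case: (eqVneq k l) => [<-|hkl].
  rewrite (eq_bigr (fun w => `|q| ^+ winv n w * `|q| ^+ winv n w)); last by move=> w ->.
  have -> : \sum_(w | wt n w == k) `|q| ^+ winv n w * `|q| ^+ winv n w =
      fnorm q n k * fnorm q n k.
    rewrite -expr2 /fnorm sqr_sqrtr; last first.
      by apply: sumr_ge0 => w _; rewrite exprM exprn_ge0 // sqr_ge0.
    apply: eq_bigr => w _.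
    by rewrite -exprMn -expr2 real_normK ?num_real // -exprM.
  by rewrite mulVf // mulf_neq0 // gt_eqF // (fnorm_gt0 hq1 hq2 hq0).
rewrite big1 ?mulr0 // => w /eqP hw.
by case: ifP => // /eqP hw'; move: hkl; rewrite -(inj_eq val_inj) /= -hw -hw' eqxx.
Qed.

End VB0.

Section Schur.
Variable R : realType.
Local Notation C := R[i].
Local Notation nc := (@Normc.normc R).
Variable I : finType.

Lemma l2norm_ge0 (v : I -> C) : 0 <= l2norm R I v.
Proof. exact: sqrtr_ge0. Qed.

Lemma sq_le (x y : R) : 0 <= x -> x <= y -> x ^+ 2 <= y ^+ 2.
Proof. move=> x0 xy; rewrite !expr2; apply: ler_pM => //. Qed.

Lemma schur (M : I -> I -> C) (cl : I -> nat) (E : R) (N : nat) :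
  0 <= E ->
  (forall p p', M p p' != 0 -> cl p = cl p') ->
  (forall p p', nc (M p p') <= E) ->
  (forall p, #|[pred p' | cl p' == cl p]| <= N)%N ->
  forall v, l2norm R I (fun p => \sum_p' M p p' * v p') <= N%:R * E * l2norm R I v.
Proof.
move=> E0 hsupp hE hN v.
pose x p := nc (v p).
pose S p := [pred p' | cl p' == cl p].
have step1 : forall p, nc (\sum_p' M p p' * v p') <= \sum_(p' in S p) E * x p'.
  move=> p; apply: le_trans (nc_sum _ _ _) _.
  rewrite [X in _ <= X]big_mkcond /=; apply: ler_sum => p' _.
  rewrite inE /=; case: eqP => h.
    by rewrite Normc.normcM ler_wpM2r ?nc_ge0.
  have -> : M p p' = 0.
    by apply/eqP; apply: contraNT (introN eqP h) => /hsupp ->.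
  by rewrite mul0r nc0.
have step2 : forall p, nc (\sum_p' M p p' * v p') ^+ 2 <=
    N%:R * \sum_(p' in S p) (E * x p') ^+ 2.
  move=> p; apply: le_trans (sq_le (nc_ge0 _) (step1 p)) _.
  apply: le_trans (cs_sum _ _) _.
  apply: ler_wpM2r; first by apply: sumr_ge0 => p' _; exact: sqr_ge0.
  by rewrite ler_nat; exact: hN.
have step3 : \sum_p \sum_(p' in S p) (E * x p') ^+ 2 <=
    N%:R * \sum_p' (E * x p') ^+ 2.
  under eq_bigr do rewrite big_mkcond /=.
  rewrite exchange_big /= mulr_sumr; apply: ler_sum => p' _.
  have -> : \sum_p (if p' \in S p then (E * x p') ^+ 2 else 0) =
      \sum_(p in S p') (E * x p') ^+ 2.
    rewrite [RHS]big_mkcond; apply: eq_bigr => p _.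
    by rewrite !inE eq_sym.
  rewrite sumr_const -[_ *+ #|_|]mulr_natl; apply: ler_wpM2r; first exact: sqr_ge0.
  by rewrite ler_nat; exact: hN.
have hsum : 0 <= \sum_i nc (v i) ^+ 2 by apply: sumr_ge0 => i _; exact: sqr_ge0.
rewrite /l2norm.
rewrite -[X in _ <= X]ger0_norm; last by rewrite !mulr_ge0 ?ler0n ?sqrtr_ge0.
rewrite -sqrtr_sqr ler_sqrt; last by rewrite sqr_ge0.
rewrite exprMn sqr_sqrtr //.
apply: le_trans (ler_sum _ (fun p _ => step2 p)) _.
rewrite -mulr_sumr; apply: le_trans (ler_wpM2l (ler0n _ _) step3) _.
rewrite mulrA -expr2 exprMn -mulrA; apply: ler_wpM2l; first exact: sqr_ge0.
by rewrite mulr_sumr le_eqVlt; apply/orP; left; apply/eqP; apply: eq_bigr => i _; rewrite exprMn.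
Qed.

End Schur.

Section Opnorm.
Variable R : realType.
Local Notation C := R[i].
Local Notation nc := (@Normc.normc R).
Variable I : finType.

Lemma l2norm0 : l2norm R I (fun _ => 0) = 0.
Proof. by rewrite /l2norm big1 ?sqrtr0 // => i _; rewrite nc0 expr0n. Qed.

Lemma l2norm_ge_entry (w : I -> C) p : nc (w p) <= l2norm R I w.
Proof.
rewrite /l2norm -[X in X <= _]ger0_norm ?nc_ge0 // -sqrtr_sqr ler_sqrt; last first.
  by apply: sumr_ge0 => i _; exact: sqr_ge0.
rewrite (bigD1 p) //= lerDl; apply: sumr_ge0 => i _; exact: sqr_ge0.
Qed.

Lemma l2norm_delta p0 : l2norm R I (fun p => if p == p0 then 1 else 0) = 1.
Proof.
rewrite /l2norm (bigD1 p0) //= eqxx big1 ?addr0; last first.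
  by move=> i /negbTE ->; rewrite nc0 expr0n.
by rewrite Normc.normc1 expr1n sqrtr1.
Qed.

Lemma opnorm_le (M : I -> I -> C) B : 0 <= B ->
  (forall v, l2norm R I v <= 1 ->
     l2norm R I (fun i => \sum_j M i j * v j) <= B) -> opnorm M <= B.
Proof.
move=> B0 hB; rewrite /opnorm; apply: ge_sup.
  exists (l2norm R I (fun i => \sum_j M i j * 0)), (fun _ => 0); split => //.
  by rewrite l2norm0.
by move=> r [v [hv ->]]; exact: hB.
Qed.

Lemma opnorm_ge (M : I -> I -> C) B p0 :
  (forall v, l2norm R I v <= 1 ->
     l2norm R I (fun i => \sum_j M i j * v j) <= B) ->
  nc (M p0 p0) <= opnorm M.
Proof.
move=> hB; rewrite /opnorm.
pose v := fun p : I => if p == p0 then 1 else (0 : C).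
have hv : l2norm R I v <= 1 by rewrite l2norm_delta.
apply: (le_trans _ (ub_le_sup _ _)); last 2 first.
- by exists B => r [w [hw ->]]; exact: hB.
- by exists v; split.
apply: le_trans (l2norm_ge_entry _ p0).
rewrite (bigD1 p0) //= /v eqxx mulr1 big1 ?addr0 //.
by move=> i /negbTE ->; rewrite mulr0.
Qed.

End Opnorm.

Section Final.
Variable R : realType.
Local Notation C := R[i].
Local Notation nc := (@Normc.normc R).
Variable q : R.
Hypothesis hq1 : -1 < q.
Hypothesis hq2 : q < 1.
Hypothesis hq0 : q != 0.

Lemma wt0_iff n (w : {ffun 'I_n -> 'I_2}) : (wt n w == 0%N) = (w == [ffun => 0%R]).
Proof.
rewrite wtE sum_nat_eq0; apply/forallP/eqP.
  move=> h; apply/ffunP => i; rewrite ffunE; have := h i.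
  by case: (I2_cases (w i)) => ->.
by move=> -> i; rewrite ffunE.
Qed.

Lemma winv0 n : winv n [ffun => 0%R] = 0%N.
Proof. by rewrite winvE big1 // => i _; rewrite big1 // => j _; rewrite !ffunE andbF. Qed.

Lemma xsX m n (i j : 'I_m.+1) : (xs q m ^+ n) i j = (qhalfpow q m i ^+ n) *+ (i == j).
Proof.
elim: n i j => [|n IH] i j; first by rewrite expr0 mxE.
rewrite exprS -mulmxE {1}(xs_diag q m) mul_diag_mx mxE IH mxE exprS.
by rewrite mulrnAr.
Qed.

Lemma vblock00 m n : vblock q m n ord0 ord0 ord0 ord0 = qhalfpow q m ord0 ^+ n.
Proof.
have hP : (fun w : {ffun 'I_n -> 'I_2} => wt n w == (@ord0 n : nat)) =1
   pred1 [ffun => 0%R] by move=> w; exact: wt0_iff.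
have hf : fnorm q n ord0 = 1.
  by rewrite /fnorm (big_pred1 _ hP) winv0 muln0 expr0 sqrtr1.
rewrite vblock_entry hf mulr1 invr1 (big_pred1 _ hP) (big_pred1 _ hP) winv0 expr0 mulr1 !mul1r.
rewrite /tensA (eq_bigr (fun _ => xs q m)); last by move=> i _; rewrite ffunE.
by rewrite prodr_const card_ord xsX eqxx mulr1n.
Qed.

Lemma class_card m n (p : 'I_n.+1 * 'I_m.+1) :
  (#|[pred p' : 'I_n.+1 * 'I_m.+1 | (p'.1 + p'.2)%N == (p.1 + p.2)%N]| <= m.+1)%N.
Proof.
rewrite -[X in (_ <= X)%N](card_ord m.+1).
apply: (leq_card_in (fun p : 'I_n.+1 * 'I_m.+1 => p.2)) => -[x1 y1] [x2 y2].
rewrite !inE /= => /eqP h1 /eqP h2 e.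
have e' : y1 = y2 := e; subst y2; congr pair.
by apply: val_inj => /=; lia.
Qed.

Lemma vst_upper m n (E : R) : 0 <= E ->
  (forall k l i j, nc (vblock q m n k l i j) <= E) ->
  forall v, l2norm R _ v <= 1 ->
  l2norm R _ (fun p => \sum_p' vst q m n p p' * v p') <= m.+1%:R * E.
Proof.
move=> E0 hE v hv.
have := @schur R _ (vst q m n) (fun p => (p.1 + p.2)%N) E m.+1 E0.
move=> /(_ _ _ (@class_card m n) v) h.
apply: le_trans (h _ _) _.
- move=> p p' /(vblock_supp hq1 hq2 hq0) hs; move/eqP: hs.
  by rewrite -!PoszD eqz_nat => /eqP h0; rewrite addnC h0 addnC.
- by move=> p p'; exact: hE.
rewrite -[X in _ <= X]mulr1; apply: ler_wpM2l => //.
by rewrite mulr_ge0 ?ler0n.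
Qed.

End Final.

Lemma two_pow (m : nat) : (m.+1 <= 2 ^ m)%N.
Proof. elim: m => // m IH; rewrite expnS; lia. Qed.

Close Scope complex_scope.

Theorem theorem5p5 (R : realType) (q : R) (hq1 : -1 < q) (hq2 : q < 1)
  (hq0 : q != 0) :
  exists Cq : R, 0 < Cq /\
  forall m n : nat,
    let s := m%:R / 2 : R in
    let t := n%:R / 2 : R in
    powR `|q| (- (2 * s * t)) <= opnorm (vst q m n) /\
    opnorm (vst q m n) <= powR Cq s * powR `|q| (- (2 * s * t)).
Proof.
have a0 : 0 <= `|q| by [].
have a1 := a_lt1 hq1 hq2.
set K := Kc `|q|.
have K1 : 1 <= K := Kc_ge1 a0 a1.
have K0 : 0 <= K := le_trans ler01 K1.
pose K2 := 2 * K ^+ 2.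
have K20 : 0 <= K2 by rewrite mulr_ge0 // exprn_ge0.
exists (K2 ^+ 2); split.
  by rewrite exprn_gt0 // mulr_gt0 // exprn_gt0 // (lt_le_trans ltr01 K1).
move=> m n s t.
have hbn : beta q m ^+ n = powR `|q| (- (2 * s * t)).
  rewrite /beta -powR_mulrn ?powR_ge0 // -powRrM; congr powR; by rewrite /s /t; field.
have b0 : 0 <= beta q m ^+ n by rewrite exprn_ge0 // beta_ge0.
have hB := vst_upper hq1 hq2 hq0 (mulr_ge0 b0 (exprn_ge0 2 K0))
   (vblock_bound hq1 hq2 hq0 (m:=m) (n:=n)).
split.
  rewrite -hbn.
  apply: le_trans (opnorm_ge (ord0, ord0) hB).
  by rewrite /vst /= vblock00 ncX nc_qhp hk_0.
rewrite -hbn.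
case: m => [|m] in s hbn b0 hB *.
  have hb0 : forall k l (i j : 'I_1), Normc.normc (vblock q 0 n k l i j) <= 1.
    by move=> k l i j; rewrite (ord1 i) (ord1 j); exact: vblock0_bound.
  have hB0 := vst_upper hq1 hq2 hq0 ler01 hb0.
  apply: le_trans (opnorm_le _ hB0) _; first by rewrite mulr1 ler01.
  rewrite /s mul0r powRr0 mul1r mulr1 /beta mul0r oppr0 powRr0 expr1n.
  by [].
apply: le_trans (opnorm_le _ hB) _; first by rewrite mulr_ge0 ?ler0n // mulr_ge0 // exprn_ge0.
have hC : powR (K2 ^+ 2) s = K2 ^+ m.+1.
  rewrite -powR_mulrn // -powRrM -powR_mulrn //; congr powR; by rewrite /s; field.
rewrite hC mulrCA [X in _ <= X]mulrC; apply: ler_wpM2l => //.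
rewrite /K2 exprMn.
apply: ler_pM; rewrite ?ler0n ?exprn_ge0 //.
  by rewrite -natrX ler_nat two_pow.
rewrite [K ^+ 2 ^+ _]exprS ler_peMr ?exprn_ge0 //.
by apply: exprn_ege1; rewrite expr_ge1.
Qed.
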